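(* Let $h$ be an interaction anchored in $X$ and $h'$ an interaction anchored in $X'$. Assume that $\sum_{x\in X}\sum_{x'\in X'}f(1+|x-x'|)<\infty$ for every $f\in\mathcal F$. Then the commutator interaction $[h,h']$ is summable; in fact $\sum_S\|[h,h']_S\|<\infty$.
   Context: $\mathcal A$ is the quasi-local $C^*$-algebra on $\mathbb Z^2$ with on-site $M_d(\mathbb C)$, with local subalgebras $\mathcal A_S$ and $\ell^\infty$ distances and diameters; $|x-x'|$ is the $\ell^\infty$ distance. $\mathcal F$ is the set of strictly positive non-increasing $f:\{1,2,\dots\}\to(0,\infty)$ with $r^pf(r)\to0$ for all $p$. An interaction $h$ assigns $h_S\in\mathcal A_S$ to finite $S$. $\|h\|_f=\sup_x\sum_{S\ni x}\|h_S\|/f(1+\mathrm{diam}S)$, and $\mathcal J$ is the set of interactions with some finite $\|h\|_f$. $h$ is anchored in $X$ if $h\in\mathcal J$ and $h_S=0$ whenever $S\cap X=\emptyset$. The commutator is $[h,h']_S=\sum_{S_1\cup S_2=S,\,S_1\cap S_2\ne\emptyset}[h_{S_1},h'_{S_2}]$. An interaction is summable if $\sum_S h_S$ converges in norm. *)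

(* Defs.v *)
From HB Require Import structures.
From mathcomp Require Import all_boot all_order all_algebra.
From mathcomp Require Import finmap.
From mathcomp Require Import all_classical all_reals all_analysis.
From mathcomp Require Import complex.
Set Implicit Arguments. Unset Strict Implicit. Unset Printing Implicit Defensive.
Import Order.TTheory GRing.Theory Num.Theory.
Local Open Scope ring_scope.
Local Open Scope classical_set_scope.
Import numFieldNormedType.Exports.

Definition site := (int * int)%type.

Definition ldist (x y : site) : nat := maxn (absz (x.1 - y.1)) (absz (x.2 - y.2)).

(* l^infinity diameter of a finite set (0 for the empty set) *)
Definition diam (S : {fset site}) : nat :=
  (\max_(x : S) \max_(y : S) ldist (val x) (val y))%N.

Section Local.
Variables (R : realType) (d : nat).
Local Notation C := (complex.complex R).

(* basis configurations of the sites in S: the local Hilbert space is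
   (C^d)^{\otimes S} = functions conf S -> C *)
Definition conf (S : {fset site}) := {ffun S -> 'I_d}.

(* local algebra A_S = M_d(C)^{\otimes S}, as kernels (matrices) on conf S *)
Definition obs (S : {fset site}) := {ffun conf S * conf S -> C}.

Definition mulo S (a b : obs S) : obs S :=
  [ffun p => \sum_(r : conf S) a (p.1, r) * b (r, p.2)].

Definition commo S (a b : obs S) : obs S := mulo a b - mulo b a.

Definition apply_obs S (a : obs S) (v : {ffun conf S -> C}) : {ffun conf S -> C} :=
  [ffun s => \sum_(t : conf S) a (s, t) * v t].

Definition cabs (z : C) : R := Num.sqrt (complex.Re z ^+ 2 + complex.Im z ^+ 2).

Definition vnorm S (v : {ffun conf S -> C}) : R :=
  Num.sqrt (\sum_(s : conf S) cabs (v s) ^+ 2).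

(* C*-norm = operator norm on the local Hilbert space *)
Definition opnorm S (a : obs S) : R :=
  sup [set vnorm (apply_obs a v) | v in [set v : {ffun conf S -> C} | vnorm v <= 1]].

(* embedding A_S -> A_T for S ⊆ T : a |-> a ⊗ 1_{T \ S} *)
Definition restr S T (H : (S `<=` T)%fset) (s : conf T) : conf S :=
  [ffun x : S => s (fincl H x)].

Definition agree_off (S T : {fset site}) (s t : conf T) : bool :=
  [forall x : T, (val x \notin S) ==> (s x == t x)].

Definition embH S T (H : (S `<=` T)%fset) (a : obs S) : obs T :=
  [ffun p => a (restr H p.1, restr H p.2) * (agree_off S p.1 p.2)%:R].

(* total version (0 when S is not contained in T; only used with S ⊆ T) *)
Definition emb S T (a : obs S) : obs T :=
  match @idP (S `<=` T)%fset with
  | ReflectT H => embH H a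
  | ReflectF _ => 0
  end.

Definition interaction := forall S : {fset site}, obs S.

Definition inF (f : nat -> R) : Prop :=
  [/\ (forall r, (0 < r)%N -> 0 < f r),
      (forall r s, (0 < r)%N -> (r <= s)%N -> f s <= f r) &
      (forall p : nat, (fun r : nat => r%:R ^+ p * f r) @ \oo --> (0 : R))].

Definition fsum (f : nat -> R) (h : interaction) (x : site) : \bar R :=
  \esum_(S in [set S : {fset site} | x \in S]) ((opnorm (h S) / f (1 + diam S)%N)%:E).

Definition inJ (h : interaction) : Prop :=
  exists f, inF f /\ exists M : R, forall x, (fsum f h x <= M%:E)%E.

Definition anchored (X : set site) (h : interaction) : Prop :=
  inJ h /\ forall S : {fset site}, (forall x, x \in S -> ~ X x) -> h S = 0.

Definition comm_int (h h' : interaction) : interaction := fun S =>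
  \sum_(S1 <- fpowerset S)
    \sum_(S2 <- fpowerset S | ((S1 `|` S2)%fset == S) && ((S1 `&` S2)%fset != fset0))
      commo (emb S (h S1)) (emb S (h' S2)).

End Local.

(* Main.v *)
Require Import Defs.
From HB Require Import structures.
From mathcomp Require Import all_boot all_order all_algebra.
From mathcomp Require Import finmap.
From mathcomp Require Import all_classical all_reals all_analysis.
From mathcomp Require Import complex.
From mathcomp Require Import lra ring zify.
Import Order.TTheory GRing.Theory Num.Theory.
Local Open Scope ring_scope.
Set Implicit Arguments. Unset Strict Implicit. Unset Printing Implicit Defensive.
Module M_n12.
Section RealFacts.
Variable R : realType.

Lemma cs_sq (I : finType) (x y : I -> R) :
  (\sum_i x i * y i) ^+ 2 <= (\sum_i x i ^+ 2) * (\sum_i y i ^+ 2).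
Proof.
set A := \sum_i x i ^+ 2; set B := \sum_i y i ^+ 2; set P := \sum_i x i * y i.
have E : (\sum_i \sum_j (x i * y j - x j * y i) ^+ 2) =
   \sum_i \sum_j (x i ^+ 2 * y j ^+ 2) + \sum_i \sum_j (y i ^+ 2 * x j ^+ 2)
   - 2 * \sum_i \sum_j ((x i * y i) * (x j * y j)).
  rewrite mulr_sumr -!big_split -sumrB /=; apply: eq_bigr => i _.
  rewrite mulr_sumr -!big_split -sumrB /=; apply: eq_bigr => j _.
  ring.
have E1 : \sum_i \sum_j (x i ^+ 2 * y j ^+ 2) = A * B.
  by rewrite /A /B big_distrl; apply: eq_bigr => i _; rewrite big_distrr.
have E2 : \sum_i \sum_j (y i ^+ 2 * x j ^+ 2) = A * B.
  by rewrite mulrC /A /B big_distrl; apply: eq_bigr => i _; rewrite big_distrr.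
have E3 : \sum_i \sum_j ((x i * y i) * (x j * y j)) = P ^+ 2.
  by rewrite expr2 /P big_distrl; apply: eq_bigr => i _; rewrite big_distrr.
have : 0 <= \sum_i \sum_j (x i * y j - x j * y i) ^+ 2.
  by apply: sumr_ge0 => i _; apply: sumr_ge0 => j _; exact: sqr_ge0.
rewrite E E1 E2 E3 => H; lra.
Qed.

Lemma cs (I : finType) (x y : I -> R) :
  \sum_i x i * y i <= Num.sqrt (\sum_i x i ^+ 2) * Num.sqrt (\sum_i y i ^+ 2).
Proof.
have A0 : 0 <= \sum_i x i ^+ 2 by apply: sumr_ge0 => i _; exact: sqr_ge0.
have B0 : 0 <= \sum_i y i ^+ 2 by apply: sumr_ge0 => i _; exact: sqr_ge0.
rewrite -sqrtrM //; apply: le_trans (ler_norm _) _.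
rewrite -sqrtr_sqr ler_wsqrtr //; exact: cs_sq.
Qed.

Lemma minkowski_fin (I : finType) (x y : I -> R) :
  Num.sqrt (\sum_i (x i + y i) ^+ 2) <=
  Num.sqrt (\sum_i x i ^+ 2) + Num.sqrt (\sum_i y i ^+ 2).
Proof.
have A0 : 0 <= \sum_i x i ^+ 2 by apply: sumr_ge0 => i _; exact: sqr_ge0.
have B0 : 0 <= \sum_i y i ^+ 2 by apply: sumr_ge0 => i _; exact: sqr_ge0.
have C := cs x y.
have s0 : 0 <= Num.sqrt (\sum_i x i ^+ 2) + Num.sqrt (\sum_i y i ^+ 2) by rewrite addr_ge0 ?sqrtr_ge0.
rewrite -[X in _ <= X]ger0_norm // -sqrtr_sqr ler_wsqrtr //.
have -> : \sum_i (x i + y i) ^+ 2 = \sum_i x i ^+ 2 + 2 * \sum_i x i * y i + \sum_i y i ^+ 2.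
  rewrite mulr_sumr -!big_split /=; apply: eq_bigr => i _; ring.
rewrite sqrrD !sqr_sqrtr //. lra.
Qed.
End RealFacts.

Section Vec.
Variables (R : realType) (d : nat).
Local Notation C := (complex R).

Lemma cabsE (z : C) : cabs z = Normc.normc z.
Proof. by case: z. Qed.
Lemma cabs_ge0 (z : C) : 0 <= cabs z.
Proof. exact: sqrtr_ge0. Qed.
Lemma cabsM (z w : C) : cabs (z * w) = cabs z * cabs w.
Proof. by rewrite !cabsE Normc.normcM. Qed.
Lemma cabsD (z w : C) : cabs (z + w) <= cabs z + cabs w.
Proof. by rewrite !cabsE le_normcD. Qed.
Lemma cabs0 : cabs (0 : C) = 0.
Proof. by rewrite cabsE Normc.normc0. Qed.
Lemma cabsN1 : cabs (-1 : C) = 1.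
Proof. by rewrite /cabs /= oppr0 expr0n addr0 sqrrN expr1n sqrtr1. Qed.
Lemma cabs_real (r : R) : 0 <= r -> cabs (r%:C)%C = r.
Proof. by move=> r0; rewrite /cabs /= expr0n /= addr0 sqrtr_sqr ger0_norm. Qed.

Variable S : {fset site}.
Implicit Types v w : {ffun conf d S -> C}.

Lemma vnorm_ge0 v : 0 <= vnorm v.
Proof. exact: sqrtr_ge0. Qed.

Lemma vnorm0 : vnorm (0 : {ffun conf d S -> C}) = 0.
Proof.
rewrite /vnorm big1 ?sqrtr0 // => s _; rewrite ffunE cabs0 expr0n //.
Qed.

Lemma vnormD v w : vnorm (v + w) <= vnorm v + vnorm w.
Proof.
apply: le_trans (minkowski_fin (fun s => cabs (v s)) (fun s => cabs (w s))).
rewrite ler_wsqrtr // ler_sum // => s _; rewrite ffunE.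
rewrite ler_sqr ?nnegrE ?cabs_ge0 ?addr_ge0 ?cabs_ge0 //; exact: cabsD.
Qed.

Lemma vnormZ (z : C) v : vnorm [ffun s => z * v s] = cabs z * vnorm v.
Proof.
rewrite /vnorm -[cabs z]ger0_norm ?cabs_ge0 // -sqrtr_sqr -sqrtrM ?sqr_ge0 //.
by rewrite mulr_sumr; congr Num.sqrt; apply: eq_bigr => s _; rewrite ffunE cabsM exprMn.
Qed.

Lemma cabs_le_vnorm v t : cabs (v t) <= vnorm v.
Proof.
rewrite -[cabs _]ger0_norm ?cabs_ge0 // -sqrtr_sqr ler_wsqrtr //.
rewrite (bigD1 t) //= lerDl; apply: sumr_ge0 => i _; exact: sqr_ge0.
Qed.

Lemma vnorm_sum (I : Type) (r : seq I) (P : pred I) (F : I -> {ffun conf d S -> C}) :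
  vnorm (\sum_(i <- r | P i) F i) <= \sum_(i <- r | P i) vnorm (F i).
Proof.
apply: (big_ind2 (fun w x => vnorm w <= x)); first by rewrite vnorm0.
  by move=> w1 x1 w2 x2 h1 h2; apply: le_trans (vnormD _ _) _; exact: lerD.
by [].
Qed.

Definition colo (a : obs R d S) t : {ffun conf d S -> C} := [ffun s => a (s, t)].

Lemma apply_obsE (a : obs R d S) v :
  apply_obs a v = \sum_t [ffun s => v t * colo a t s].
Proof.
by apply/ffunP => s; rewrite ffunE sum_ffunE; apply: eq_bigr => t _; rewrite !ffunE mulrC.
Qed.

Lemma apply_bound (a : obs R d S) v :
  vnorm (apply_obs a v) <= vnorm v * \sum_t vnorm (colo a t).
Proof.
rewrite apply_obsE; apply: le_trans (vnorm_sum _ _ _) _.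
rewrite mulr_sumr ler_sum // => t _; rewrite vnormZ ler_wpM2r ?vnorm_ge0 //.
exact: cabs_le_vnorm.
Qed.

End Vec.

End M_n12.
Import M_n12.
Module M_n345.
Local Open Scope classical_set_scope.
Section Op.
Variables (R : realType) (d : nat) (S : {fset site}).
Local Notation C := (complex R).
Implicit Types (a b : obs R d S) (v w : {ffun conf d S -> C}).

Lemma apply0 a : apply_obs a 0 = 0.
Proof. by apply/ffunP => s; rewrite !ffunE big1 // => t _; rewrite ffunE mulr0. Qed.

Lemma opnorm_ub a : has_ubound [set vnorm (apply_obs a v) | v in [set v | vnorm v <= 1]].
Proof.
exists (\sum_t vnorm (colo a t)) => _ [v /= v1 <-].
apply: le_trans (apply_bound a v) _; rewrite ler_piMl //.
by apply: sumr_ge0 => t _; exact: vnorm_ge0.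
Qed.

Lemma opnorm_ge0 a : 0 <= opnorm a.
Proof.
have := ub_le_sup (opnorm_ub a); apply; exists 0; last by rewrite apply0 vnorm0.
by rewrite /= vnorm0.
Qed.

Lemma opnorm_le a M : 0 <= M -> (forall v, vnorm (apply_obs a v) <= M * vnorm v) ->
  opnorm a <= M.
Proof.
move=> M0 H; apply: ge_sup; first by exists (vnorm (apply_obs a 0)), 0 => //=; rewrite vnorm0.
move=> _ [v /= v1 <-]; apply: le_trans (H v) _; rewrite ler_piMr //.
Qed.

Lemma applyZ a (z : C) v : apply_obs a [ffun s => z * v s] = [ffun s => z * apply_obs a v s].
Proof.
apply/ffunP => s; rewrite !ffunE mulr_sumr; apply: eq_bigr => t _; rewrite !ffunE.
by rewrite mulrCA.
Qed.

Lemma apply_le a v : vnorm (apply_obs a v) <= opnorm a * vnorm v.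
Proof.
have [v0|vp] := eqVneq (vnorm v) 0.
  have := apply_bound a v; rewrite v0 mul0r mulr0 => h.
  by apply: le_trans h _.
have vpos : 0 < vnorm v by rewrite lt_def vp vnorm_ge0.
set k : C := ((vnorm v)^-1)%:C%C.
have kk : cabs k = (vnorm v)^-1 by rewrite /k cabs_real // invr_ge0 vnorm_ge0.
have H : vnorm (apply_obs a [ffun s => k * v s]) <= opnorm a.
  apply: (ub_le_sup (opnorm_ub a)); exists [ffun s => k * v s] => //=.
  by rewrite vnormZ kk mulVf.
move: H; rewrite applyZ vnormZ kk => H.
by rewrite -ler_pdivrMr // mulrC.
Qed.

Lemma opnormD a b : opnorm (a + b) <= opnorm a + opnorm b.
Proof.
apply: opnorm_le; first by rewrite addr_ge0 ?opnorm_ge0.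
move=> v; have -> : apply_obs (a + b) v = apply_obs a v + apply_obs b v.
  apply/ffunP => s; rewrite !ffunE -big_split /=; apply: eq_bigr => t _.
  by rewrite ffunE mulrDl.
by rewrite mulrDl; apply: le_trans (vnormD _ _) _; apply: lerD; exact: apply_le.
Qed.

Lemma opnormN a : opnorm (- a) <= opnorm a.
Proof.
apply: opnorm_le; first exact: opnorm_ge0.
move=> v; have -> : apply_obs (- a) v = [ffun s => (-1) * apply_obs a v s].
  apply/ffunP => s; rewrite !ffunE mulr_sumr; apply: eq_bigr => t _.
  by rewrite ffunE mulN1r mulNr.
by rewrite vnormZ cabsN1 mul1r; exact: apply_le.
Qed.

Lemma opnorm0 : opnorm (0 : obs R d S) = 0.
Proof.
apply/eqP; rewrite eq_le opnorm_ge0 andbT; apply: opnorm_le => // v.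
have -> : apply_obs 0 v = 0.
  by apply/ffunP => s; rewrite !ffunE big1 // => t _; rewrite ffunE mul0r.
by rewrite vnorm0 mul0r.
Qed.

Lemma opnorm_sum (I : Type) (r : seq I) (P : pred I) (F : I -> obs R d S) :
  opnorm (\sum_(i <- r | P i) F i) <= \sum_(i <- r | P i) opnorm (F i).
Proof.
apply: (big_ind2 (fun (w : obs R d S) x => opnorm w <= x)); first by rewrite opnorm0.
  by move=> w1 x1 w2 x2 h1 h2; apply: le_trans (opnormD _ _) _; exact: lerD.
by [].
Qed.

Lemma apply_mulo a b v : apply_obs (Defs.mulo a b) v = apply_obs a (apply_obs b v).
Proof.
apply/ffunP => s; rewrite !ffunE.
under eq_bigr do rewrite ffunE mulr_suml.
rewrite exchange_big /=; apply: eq_bigr => r _.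
by rewrite ffunE mulr_sumr; apply: eq_bigr => t _; rewrite mulrA.
Qed.

Lemma opnormM a b : opnorm (Defs.mulo a b) <= opnorm a * opnorm b.
Proof.
apply: opnorm_le; first by rewrite mulr_ge0 ?opnorm_ge0.
move=> v; rewrite apply_mulo; apply: le_trans (apply_le _ _) _.
by rewrite -mulrA ler_wpM2l ?opnorm_ge0 // apply_le.
Qed.

Lemma opnorm_commo a b : opnorm (commo a b) <= 2 * (opnorm a * opnorm b).
Proof.
rewrite /commo; apply: le_trans (opnormD _ _) _.
apply: le_trans (lerD (lexx _) (opnormN _)) _.
have h1 := opnormM a b; have h2 := opnormM b a.
rewrite [opnorm b * _]mulrC in h2; lra.
Qed.

End Op.

Section Emb.
Variables (R : realType) (d : nat) (S T : {fset site}) (H : (S `<=` T)%fset).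
Local Notation C := (complex R).

Definition glue (t : conf d T) (s : conf d S) : conf d T :=
  [ffun x : T => match (insub (val x) : option S) with Some y => s y | None => t x end].

Lemma glue_restr t s : restr H (glue t s) = s.
Proof.
apply/ffunP => y; rewrite !ffunE /=.
case: insubP => [u _ uv|]; last by rewrite (valP y).
by congr (s _); apply: val_inj; rewrite uv.
Qed.

Lemma agree_sym (s t : conf d T) : agree_off S s t = agree_off S t s.
Proof.
by apply/forallP/forallP => h x; move: (h x); rewrite eq_sym.
Qed.

Lemma agree_glue t s : agree_off S t (glue t s).
Proof.
apply/forallP => x; apply/implyP => xS; rewrite ffunE.
by case: insubP => [u xS'|] //; rewrite (negbTE xS) in xS'.
Qed.

Lemma glue_agree t t' : agree_off S t t' -> glue t (restr H t') = t'.
Proof.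
move=> /forallP ag; apply/ffunP => x; rewrite !ffunE.
case: insubP => [u _ uv|xS]; last by move: (ag x); rewrite xS /= => /eqP.
by rewrite ffunE; congr (t' _); apply: val_inj; rewrite /= uv.
Qed.

Lemma glue_glue t s' s : glue (glue t s') s = glue t s.
Proof.
apply/ffunP => x; rewrite !ffunE.
by case: insubP => [u _ uv|xS] //; rewrite ffunE; case: insubP => [u' xS' _|//]; rewrite (negbTE xS) in xS'.
Qed.

Lemma sum_agree (V : nmodType) (t : conf d T) (F : conf d T -> V) :
  \sum_(t' | agree_off S t t') F t' = \sum_s F (glue t s).
Proof.
rewrite (reindex_onto (glue t) (restr H)); last by move=> i; exact: glue_agree.
by apply: eq_bigl => s; rewrite agree_glue glue_restr eqxx.
Qed.

Lemma sum_glue (F : conf d T -> R) :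
  \sum_t \sum_s F (glue t s) = #|conf d S|%:R * \sum_t F t.
Proof.
transitivity (\sum_t \sum_t' (agree_off S t t')%:R * F t').
  apply: eq_bigr => t _; rewrite -sum_agree [RHS](bigID (agree_off S t)) /=.
  rewrite [X in _ = _ + X]big1 ?addr0; last by move=> t' /negbTE ->; rewrite mul0r.
  by apply: eq_bigr => t' ->; rewrite mul1r.
rewrite exchange_big mulr_sumr; apply: eq_bigr => t' _.
rewrite -mulr_suml; congr (_ * _).
rewrite (bigID (agree_off S t')) /= [X in _ + X]big1 ?addr0; last first.
  by move=> t; rewrite agree_sym => /negbTE ->.
rewrite (eq_bigr (fun _ => 1)); last by move=> t; rewrite agree_sym => ->.
by rewrite (sum_agree t' (fun _ => (1 : R))) sumr_const.
Qed.

End Emb.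

Lemma vnorm_sq (R : realType) (d : nat) (S : {fset site}) (w : {ffun conf d S -> complex R}) :
  vnorm w ^+ 2 = \sum_s cabs (w s) ^+ 2.
Proof. by rewrite /vnorm sqr_sqrtr //; apply: sumr_ge0 => i _; exact: sqr_ge0. Qed.

Section EmbNorm.
Variables (R : realType) (d : nat) (S T : {fset site}) (H : (S `<=` T)%fset).
Local Notation C := (complex R).

Definition wv (v : {ffun conf d T -> C}) t : {ffun conf d S -> C} := [ffun s => v (glue t s)].

Lemma apply_embH (a : obs R d S) v t :
  apply_obs (embH H a) v t = apply_obs a (wv v t) (restr H t).
Proof.
rewrite !ffunE.
transitivity (\sum_(t' | agree_off S t t') a (restr H t, restr H t') * v t').
  rewrite [LHS](bigID (agree_off S t)) /= [X in _ + X]big1 ?addr0.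
    by apply: eq_bigr => t' ag; rewrite ffunE /= ag mulr1.
  by move=> t' /negbTE ag; rewrite ffunE /= ag mulr0 mul0r.
rewrite (sum_agree H); apply: eq_bigr => s _.
by rewrite glue_restr ffunE.
Qed.

Lemma embH_le (a : obs R d S) v : vnorm (apply_obs (embH H a) v) <= opnorm a * vnorm v.
Proof.
set E := apply_obs (embH H a) v.
have P0 : 0 <= opnorm a * vnorm v by rewrite mulr_ge0 ?opnorm_ge0 ?vnorm_ge0.
case: (pickP (fun _ : conf d T => true)) => [t0 _|none]; last first.
  by rewrite /vnorm big_pred0 ?sqrtr0.
set N : R := #|conf d S|%:R.
have Npos : 0 < N.
  rewrite ltr0n; apply/card_gt0P; by exists (restr H t0).
have sq_ge0 (I : finType) (F : I -> R) : 0 <= \sum_i F i ^+ 2.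
  by apply: sumr_ge0 => i _; exact: sqr_ge0.
have key : N * vnorm E ^+ 2 <= N * (opnorm a * vnorm v) ^+ 2.
  rewrite vnorm_sq /N -(sum_glue H).
  have -> : \sum_t \sum_(s : conf d S) cabs (E (glue t s)) ^+ 2 =
            \sum_t vnorm (apply_obs a (wv v t)) ^+ 2.
    apply: eq_bigr => t _; rewrite vnorm_sq; apply: eq_bigr => s _.
    rewrite /E apply_embH glue_restr; congr (cabs (apply_obs a _ s) ^+ 2).
    by apply/ffunP => s'; rewrite !ffunE glue_glue.
  apply: (@le_trans _ _ (\sum_t (opnorm a) ^+ 2 * vnorm (wv v t) ^+ 2)).
    apply: ler_sum => t _; rewrite -exprMn ler_sqr ?nnegrE ?vnorm_ge0 ?mulr_ge0 ?opnorm_ge0 ?vnorm_ge0 //.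
    exact: apply_le.
  rewrite -mulr_sumr exprMn vnorm_sq mulrCA /N -(sum_glue H) ler_wpM2l ?sqr_ge0 //.
  apply: ler_sum => t _; rewrite vnorm_sq.
  by apply: ler_sum => s _; rewrite ffunE.
rewrite ler_pM2l // in key.
by rewrite -ler_sqr ?nnegrE ?vnorm_ge0.
Qed.

Lemma opnorm_embH (a : obs R d S) : opnorm (embH H a) <= opnorm a.
Proof. apply: opnorm_le; [exact: opnorm_ge0 | exact: embH_le]. Qed.

End EmbNorm.

Lemma opnorm_emb (R : realType) (d : nat) (S T : {fset site}) (a : obs R d S) :
  opnorm (emb T a) <= opnorm a.
Proof.
rewrite /emb; destruct (@idP (S `<=` T)%fset) as [H|H]; first exact: opnorm_embH.
by rewrite opnorm0 opnorm_ge0.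
Qed.

Lemma opnorm_comm_int (R : realType) (d : nat) (h h' : interaction R d) (S : {fset site}) :
  opnorm (comm_int h h' S) <=
  \sum_(S1 <- fpowerset S)
    \sum_(S2 <- fpowerset S | ((S1 `|` S2)%fset == S) && ((S1 `&` S2)%fset != fset0))
      2 * (opnorm (h S1) * opnorm (h' S2)).
Proof.
apply: le_trans (opnorm_sum _ _ _) _; apply: ler_sum => S1 _.
apply: le_trans (opnorm_sum _ _ _) _; apply: ler_sum => S2 _.
apply: le_trans (opnorm_commo _ _) _.
rewrite ler_wpM2l // ler_pM ?opnorm_ge0 //; exact: opnorm_emb.
Qed.

End M_n345.
Import M_n345.
Module M_c.
Local Open Scope classical_set_scope.
Section Chain.
Variable R : realType.

Lemma big_ind_mul (I : eqType) (r : seq I) (P : pred I) (F : I -> R) :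
  \sum_(i <- r | P i) F i = \sum_(i <- r) (P i)%:R * F i.
Proof. by rewrite big_mkcond; apply: eq_bigr => i _; case: (P i); rewrite ?mul1r ?mul0r. Qed.

Lemma sum_filter_le (I : eqType) (r : seq I) (P : pred I) (F : I -> R) :
  (forall i, 0 <= F i) -> \sum_(i <- r | P i) F i <= \sum_(i <- r) F i.
Proof.
move=> F0; rewrite big_mkcond ler_sum // => i _; case: (P i) => //.
Qed.

Lemma term_le_sum (I : eqType) (r : seq I) (F : I -> R) (i : I) :
  uniq r -> i \in r -> (forall j, 0 <= F j) -> F i <= \sum_(j <- r) F j.
Proof.
move=> ur ir F0; rewrite (bigD1_seq i) //= lerDl; apply: sumr_ge0 => j _; exact: F0.
Qed.

Lemma chain (U : {fset site}) (P : seq {fset site}) (nn nn' : {fset site} -> R)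
    (XX XX' : pred site) (F F' : site -> site -> R) :
  (forall S, 0 <= nn S) -> (forall S, 0 <= nn' S) ->
  (forall S, S \in P -> (S `<=` U)%fset) ->
  (forall S, S \in P -> nn S <= \sum_(x <- U | XX x) (x \in S)%:R * nn S) ->
  (forall S, S \in P -> nn' S <= \sum_(x <- U | XX' x) (x \in S)%:R * nn' S) ->
  (forall x z, \sum_(S <- P | (x \in S) && (z \in S)) nn S <= F x z) ->
  (forall x z, \sum_(S <- P | (x \in S) && (z \in S)) nn' S <= F' x z) ->
  \sum_(S1 <- P) \sum_(S2 <- P | (S1 `&` S2)%fset != fset0) nn S1 * nn' S2 <=
  \sum_(x <- U | XX x) \sum_(x' <- U | XX' x') \sum_(z <- U) F x z * F' x' z.
Proof.
move=> n0 n'0 PU an an' hF hF'.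
set A := fun S : {fset site} => \sum_(x <- U | XX x) (x \in S)%:R * nn S.
set B := fun S : {fset site} => \sum_(x <- U | XX' x) (x \in S)%:R * nn' S.
have A0 S : 0 <= A S by apply: sumr_ge0 => x _; rewrite mulr_ge0.
have B0 S : 0 <= B S by apply: sumr_ge0 => x _; rewrite mulr_ge0.
have ind0 (b : bool) : 0 <= b%:R :> R by case: b.
apply: (@le_trans _ _ (\sum_(S1 <- P) \sum_(S2 <- P) \sum_(z <- U)
            ((z \in S1)%:R * A S1) * ((z \in S2)%:R * B S2))).
  rewrite big_seq [X in _ <= X]big_seq; apply: ler_sum => S1 S1P.
  apply: (@le_trans _ _ (\sum_(S2 <- P | (S1 `&` S2)%fset != fset0) \sum_(z <- U)
            ((z \in S1)%:R * A S1) * ((z \in S2)%:R * B S2))); last first.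
    apply: sum_filter_le => S2; apply: sumr_ge0 => z _; rewrite !mulr_ge0 //.
  rewrite big_seq_cond [X in _ <= X]big_seq_cond; apply: ler_sum => S2 /andP[S2P m].
  have [z] := fset0Pn _ m => /fsetIP[zS1 zS2].
  have zU : z \in U by apply: (fsubsetP (PU _ S1P)).
  apply: le_trans _ (@term_le_sum _ _ (fun z => ((z \in S1)%:R * A S1) * ((z \in S2)%:R * B S2)) _ (fset_uniq U) zU _).
    by rewrite /= zS1 zS2 !mul1r ler_pM ?an ?an'.
  by move=> j; rewrite !mulr_ge0.
have -> : \sum_(S1 <- P) \sum_(S2 <- P) \sum_(z <- U)
            ((z \in S1)%:R * A S1) * ((z \in S2)%:R * B S2) =
          \sum_(z <- U) (\sum_(S1 <- P) (z \in S1)%:R * A S1) * (\sum_(S2 <- P) (z \in S2)%:R * B S2).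
  under eq_bigr do rewrite exchange_big /=.
  rewrite exchange_big /=; apply: eq_bigr => z _.
  rewrite big_distrlr /=; apply: eq_bigr => S1 _; apply: eq_bigr => S2 _ //.
have hA z : \sum_(S1 <- P) (z \in S1)%:R * A S1 <= \sum_(x <- U | XX x) F x z.
  rewrite /A; under eq_bigr do rewrite mulr_sumr.
  rewrite exchange_big /=; apply: ler_sum => x _.
  apply: le_trans (hF x z); rewrite [X in _ <= X]big_ind_mul; apply: ler_sum => S _.
  by case: (x \in S); case: (z \in S); rewrite /= ?mul1r ?mul0r ?mulr0.
have hB z : \sum_(S2 <- P) (z \in S2)%:R * B S2 <= \sum_(x <- U | XX' x) F' x z.
  rewrite /B; under eq_bigr do rewrite mulr_sumr.
  rewrite exchange_big /=; apply: ler_sum => x _.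
  apply: le_trans (hF' x z); rewrite [X in _ <= X]big_ind_mul; apply: ler_sum => S _.
  by case: (x \in S); case: (z \in S); rewrite /= ?mul1r ?mul0r ?mulr0.
apply: (@le_trans _ _ (\sum_(z <- U) (\sum_(x <- U | XX x) F x z) * (\sum_(x <- U | XX' x) F' x z))).
  apply: ler_sum => z _; apply: ler_pM; try apply: sumr_ge0 => S _; rewrite ?mulr_ge0 //.
rewrite le_eqVlt; apply/orP; left; apply/eqP.
under eq_bigr do rewrite big_distrlr /=.
rewrite exchange_big /=; apply: eq_bigr => x _.
rewrite exchange_big /=; apply: eq_bigr => x' _ //.
Qed.

End Chain.

Section Union.
Variable R : realType.

Lemma union_step (A : {fset {fset site}}) (U : {fset site}) (G : {fset site} -> {fset site} -> R) :
  (forall S, S \in A -> (S `<=` U)%fset) -> (forall S1 S2, 0 <= G S1 S2) ->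
  \sum_(S <- A) \sum_(S1 <- fpowerset S)
     \sum_(S2 <- fpowerset S | ((S1 `|` S2)%fset == S) && ((S1 `&` S2)%fset != fset0)) G S1 S2
  <= \sum_(S1 <- fpowerset U) \sum_(S2 <- fpowerset U | (S1 `&` S2)%fset != fset0) G S1 S2.
Proof.
move=> AU G0.
have step1 S : S \in A ->
  \sum_(S1 <- fpowerset S)
     \sum_(S2 <- fpowerset S | ((S1 `|` S2)%fset == S) && ((S1 `&` S2)%fset != fset0)) G S1 S2
  = \sum_(S1 <- fpowerset U) \sum_(S2 <- fpowerset U)
     (if ((S1 `|` S2)%fset == S) && ((S1 `&` S2)%fset != fset0) then G S1 S2 else 0).
  move=> SA; have sPU : (fpowerset S `<=` fpowerset U)%fset by rewrite fpowersetS AU.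
  transitivity (\sum_(S1 <- fpowerset S) \sum_(S2 <- fpowerset U)
     (if ((S1 `|` S2)%fset == S) && ((S1 `&` S2)%fset != fset0) then G S1 S2 else 0)).
    apply: eq_bigr => S1 _; rewrite big_mkcond; apply: big_fset_incl => // S2 _.
    rewrite fpowersetE => nS2; case: eqP => // eS.
    by move: nS2; rewrite -eS fsubsetUr.
  apply: big_fset_incl => // S1 _; rewrite fpowersetE => nS1.
  apply: big1_fset => S2 _ _; case: eqP => // eS.
  by move: nS1; rewrite -eS fsubsetUl.
rewrite big_seq (eq_bigr _ step1) -big_seq.
rewrite exchange_big /=; apply: ler_sum => S1 _.
rewrite exchange_big /= [X in _ <= X]big_mkcond /=; apply: ler_sum => S2 _.
case: ((S1 `&` S2)%fset != fset0); last by rewrite big1 // => S _; rewrite andbF.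
under eq_bigr do rewrite andbT.
rewrite -big_mkcond /=.
have [inA|notinA] := boolP ((S1 `|` S2)%fset \in A).
  rewrite (eq_bigl (fun S => S == (S1 `|` S2)%fset)); last by move=> S; rewrite eq_sym.
  by rewrite (@fbig_pred1_inj _ _ _ _ _ _ id).
rewrite big1_fset ?G0 // => S SA /eqP eS; move: notinA; rewrite eS SA.
by [].
Qed.

End Union.

End M_c.
Import M_c.
Module M_d.
Import numFieldNormedType.Exports.
Local Open Scope classical_set_scope.
Section Decay.
Variable R : realType.

Definition phi (k : nat) : R := ((k.+1)%:R ^+ 2)^-1.
Definition psi (n : int) : R := phi (absz n).

Lemma phi_ge0 k : 0 <= phi k.
Proof. by rewrite /phi invr_ge0 exprn_ge0 // ler0n. Qed.
Lemma psi_ge0 n : 0 <= psi n.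
Proof. exact: phi_ge0. Qed.

Lemma sum_phi_iota m : \sum_(k <- iota 0 m) phi k <= 2 - 2 / (m.+1)%:R.
Proof.
elim: m => [|m IH]; first by rewrite big_nil divr1 subrr.
rewrite -addn1 iotaD big_cat /= big_seq1 add0n.
apply: le_trans (lerD IH (lexx _)) _.
rewrite /phi addn1 -[(m.+2)%:R]natr1.
set y : R := (m.+1)%:R.
have y1 : 1 <= y by rewrite /y ler1n.
rewrite -subr_ge0.
have -> : 2 - 2 / (y + 1) - (2 - 2 / y + (y ^+ 2)^-1) = (y - 1) / (y ^+ 2 * (y + 1)).
  by field; rewrite ?gt_eqF // ?mulf_neq0 ?expf_neq0 ?gt_eqF //; lra.
rewrite divr_ge0 // ?subr_ge0 // mulr_ge0 ?exprn_ge0 //; lra.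
Qed.

Lemma sum_uniq_sub (I : eqType) (s t : seq I) (F : I -> R) :
  uniq s -> uniq t -> {subset s <= t} -> (forall i, 0 <= F i) ->
  \sum_(i <- s) F i <= \sum_(i <- t) F i.
Proof.
move=> us ut st F0.
have pe : perm_eq s [seq i <- t | i \in s].
  apply: uniq_perm => //; first exact: filter_uniq.
  by move=> i; rewrite mem_filter; case: (boolP (i \in s)) => // /st ->.
rewrite (perm_big _ pe) big_filter big_mkcond ler_sum // => i _.
by case: (i \in s).
Qed.

Lemma sum_phi_uniq (s : seq nat) : uniq s -> \sum_(k <- s) phi k <= 2.
Proof.
move=> us; set m := (\max_(k <- s) k).+1.
apply: le_trans (sum_uniq_sub _ (iota_uniq 0 m) _ phi_ge0) _ => //.
  move=> k ks; rewrite mem_iota add0n /m ltnS.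
  exact: (@leq_bigmax_seq _ _ xpredT (fun k => k)).
apply: le_trans (sum_phi_iota m) _.
by rewrite lerBlDr lerDl divr_ge0 // ler0n.
Qed.

Lemma sum_psi_uniq (t : seq int) : uniq t -> \sum_(n <- t) psi n <= 4.
Proof.
move=> ut; rewrite (bigID (fun n : int => 0 <= n)) /=.
have -> : (4 : R) = 2 + 2 by lra.
apply: lerD.
  rewrite -big_filter -(big_map (fun n : int => absz n) xpredT phi).
  apply: sum_phi_uniq; rewrite map_inj_in_uniq ?filter_uniq //.
  move=> a b; rewrite !mem_filter => /andP[a0 _] /andP[b0 _] e.
  by rewrite -(gez0_abs a0) -(gez0_abs b0) e.
rewrite -big_filter -(big_map (fun n : int => absz n) xpredT phi).
apply: sum_phi_uniq; rewrite map_inj_in_uniq ?filter_uniq //.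
move=> a b; rewrite !mem_filter => /andP[a0 _] /andP[b0 _] e.
rewrite -ltNge in a0; rewrite -ltNge in b0.
move: a0 b0 e; lia.
Qed.

End Decay.

Section Decay2.
Variable R : realType.

Lemma sum_pred1 (I : eqType) (r : seq I) (i : I) (F : I -> R) :
  uniq r -> i \in r -> \sum_(j <- r) (if i == j then F j else 0) = F i.
Proof.
move=> ur ir; rewrite (bigD1_seq i) //= eqxx big1 ?addr0 // => j ji.
by rewrite eq_sym (negbTE ji).
Qed.

Lemma sum2d (s : seq site) (c : site) : uniq s ->
  \sum_(z <- s) psi R (c.1 - z.1) * psi R (c.2 - z.2) <= 16.
Proof.
move=> us; set s1 := undup [seq z.1 | z <- s].
have -> : \sum_(z <- s) psi R (c.1 - z.1) * psi R (c.2 - z.2) =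
   \sum_(a <- s1) \sum_(z <- s | z.1 == a) psi R (c.1 - z.1) * psi R (c.2 - z.2).
  transitivity (\sum_(z <- s) \sum_(a <- s1)
     (if z.1 == a then psi R (c.1 - z.1) * psi R (c.2 - z.2) else 0)).
    apply: eq_big_seq => z zs; rewrite sum_pred1 ?undup_uniq // mem_undup.
    exact: map_f.
  rewrite exchange_big; apply: eq_bigr => a _; by rewrite [RHS]big_mkcond.
apply: (@le_trans _ _ (\sum_(a <- s1) psi R (c.1 - a) * 4)).
  apply: ler_sum => a _.
  rewrite (eq_bigr (fun z => psi R (c.1 - a) * psi R (c.2 - z.2))); last first.
    by move=> z /eqP ->.
  rewrite -mulr_sumr ler_wpM2l ?psi_ge0 //.
  rewrite -big_filter -(big_map (fun z : site => c.2 - z.2) xpredT (psi R)).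
  apply: sum_psi_uniq; rewrite map_inj_in_uniq ?filter_uniq //.
  move=> [z1 z2] [w1 w2]; rewrite !mem_filter /= => /andP[/eqP e1 _] /andP[/eqP e2 _] e.
  congr (_, _); first by rewrite e1 e2.
  by move: e; lia.
rewrite -mulr_suml.
have -> : (16 : R) = 4 * 4 by lra.
rewrite ler_wpM2r //.
rewrite -(big_map (fun a : int => c.1 - a) xpredT (psi R)).
apply: sum_psi_uniq; rewrite map_inj_uniq ?undup_uniq //.
by move=> x y; lia.
Qed.

End Decay2.

Section Decay3.
Variable R : realType.

Lemma decay_const (f : nat -> R) : inF f ->
  exists C : R, 0 < C /\ forall r, (0 < r)%N -> r%:R ^+ 4 * f r <= C.
Proof.
case=> fpos fmon /(_ 4%N) /cvgrPdist_le /(_ 1 (@ltr01 R)) [N _ HN].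
exists (1 + N%:R ^+ 4 * f 1%N); split.
  by rewrite ltr_pwDl // mulr_ge0 ?exprn_ge0 ?ler0n // ltW // fpos.
move=> r r0; case: (leqP N r) => [Nr|rN].
  have := HN r Nr; rewrite sub0r normrN => h.
  apply: le_trans (ler_norm _) _; apply: le_trans h _.
  by rewrite lerDl mulr_ge0 ?exprn_ge0 ?ler0n // ltW // fpos.
apply: le_trans (_ : N%:R ^+ 4 * f 1%N <= _); last by rewrite lerDr.
apply: ler_pM.
- by rewrite exprn_ge0 ?ler0n.
- exact: ltW (fpos _ r0).
- by rewrite lerXn2r ?nnegrE ?ler0n // ler_nat ltnW.
- exact: fmon.
Qed.

Lemma ldist_sym (x y : site) : ldist x y = ldist y x.
Proof. by rewrite /ldist; congr maxn; lia. Qed.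

Lemma sum_decay (f : nat -> R) : inF f ->
  exists K : R, 0 < K /\ forall (s : seq site) (c : site), uniq s ->
    \sum_(z <- s) f (1 + ldist c z)%N <= K.
Proof.
move=> fF; have [C [C0 HC]] := decay_const fF.
have fpos : forall r, (0 < r)%N -> 0 < f r by case: fF.
exists (C * 16); split; first by rewrite mulr_gt0.
move=> s c us.
apply: (@le_trans _ _ (\sum_(z <- s) C * (psi R (c.1 - z.1) * psi R (c.2 - z.2)))).
  apply: ler_sum => z _.
  pose L := ldist c z.
  pose a : R := (1 + absz (c.1 - z.1))%N%:R.
  pose b : R := (1 + absz (c.2 - z.2))%N%:R.
  pose l : R := (1 + L)%N%:R.
  have a1 : 1 <= a by rewrite /a ler1n.
  have b1 : 1 <= b by rewrite /b ler1n.
  have al : a <= l by rewrite /a /l ler_nat leq_add2l leq_maxl.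
  have bl : b <= l by rewrite /b /l ler_nat leq_add2l leq_maxr.
  have hf := HC (1 + L)%N isT.
  have f0 := fpos (1 + L)%N isT.
  have -> : psi R (c.1 - z.1) * psi R (c.2 - z.2) = (a ^+ 2 * b ^+ 2)^-1.
    rewrite /psi /phi /a /b -invfM; congr (_^-1); congr (_ * _); congr (_ ^+ 2); congr (_%:R); lia.
  have ab0 : 0 < a ^+ 2 * b ^+ 2 by rewrite mulr_gt0 // exprn_gt0 // (lt_le_trans ltr01).
  rewrite ler_pdivlMr // -/L.
  apply: le_trans hf; rewrite mulrC ler_wpM2r ?(ltW f0) //.
  have -> : l ^+ 4 = l ^+ 2 * l ^+ 2 by rewrite -exprD.
  have l1 : 1 <= l by apply: le_trans al.
  apply: ler_pM.
  - by rewrite exprn_ge0 // (le_trans ler01).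
  - by rewrite exprn_ge0 // (le_trans ler01).
  - by rewrite lerXn2r ?nnegrE ?(le_trans ler01).
  - by rewrite lerXn2r ?nnegrE ?(le_trans ler01).
rewrite -mulr_sumr ler_wpM2l ?(ltW C0) //; exact: sum2d.
Qed.

End Decay3.

Lemma ldist_tri (x y z : site) : (ldist x y <= ldist x z + ldist z y)%N.
Proof. rewrite /ldist; lia. Qed.

Definition mhalf (r : nat) : nat := (1 + (r.-1)./2)%N.

Lemma mhalf_ge r : (r <= 2 * mhalf r)%N.
Proof. rewrite /mhalf -divn2; lia. Qed.

Lemma mhalf_mono r s : (r <= s)%N -> (mhalf r <= mhalf s)%N.
Proof. rewrite /mhalf -!divn2; lia. Qed.

Lemma mhalf_large N r : (2 * N <= r)%N -> (N <= mhalf r)%N.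
Proof. rewrite /mhalf -!divn2; lia. Qed.

Section G.
Variable R : realType.

Lemma decay_half (f : nat -> R) : inF f -> forall p,
  (fun r : nat => r%:R ^+ p * f (mhalf r)) @ \oo --> (0 : R).
Proof.
move=> fF p; have [fpos fmon lim] := fF.
have two0 : (0 : R) < 2 ^+ p by rewrite exprn_gt0.
apply/cvgrPdist_le => e e0.
have := lim p => /cvgrPdist_le /(_ (e / 2 ^+ p)) [|N _ HN]; first by rewrite divr_gt0.
exists (2 * N)%N => // r Nr.
have := HN (mhalf r) (mhalf_large Nr); rewrite !sub0r !normrN.
have f0 : 0 < f (mhalf r) by apply: fpos; rewrite /mhalf.
rewrite !ger0_norm ?mulr_ge0 ?exprn_ge0 ?ler0n ?(ltW f0) // => h.
apply: (@le_trans _ _ (2 ^+ p * ((mhalf r)%:R ^+ p * f (mhalf r)))).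
  rewrite mulrA -exprMn ler_wpM2r ?(ltW f0) // lerXn2r ?nnegrE ?mulr_ge0 ?ler0n //.
  by rewrite -natrM ler_nat mhalf_ge.
by move: h; rewrite ler_pdivlMr // mulrC.
Qed.

End G.

Section G2.
Variables (R : realType) (f f' : nat -> R) (K K' : R).

Definition gfun (r : nat) : R := K' * f (mhalf r) + K * f' (mhalf r).

Lemma gfun_inF : inF f -> inF f' -> 0 < K -> 0 < K' -> inF gfun.
Proof.
move=> fF f'F K0 K'0; have [fpos fmon _] := fF; have [f'pos f'mon _] := f'F.
split.
- move=> r _; rewrite /gfun addr_gt0 // mulr_gt0 //; [apply: fpos | apply: f'pos]; by rewrite /mhalf add1n.
- move=> r s r0 rs; rewrite /gfun lerD // ler_wpM2l ?(ltW K0) ?(ltW K'0) //.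
    by apply: fmon; [rewrite /mhalf add1n | exact: mhalf_mono].
  by apply: f'mon; [rewrite /mhalf add1n | exact: mhalf_mono].
- move=> p.
  have -> : (fun r : nat => r%:R ^+ p * gfun r) =
            (fun r : nat => K' * (r%:R ^+ p * f (mhalf r)) + K * (r%:R ^+ p * f' (mhalf r))).
    by apply/funext => r; rewrite /gfun; ring.
  have -> : (0 : R) = K' * 0 + K * 0 by rewrite !mulr0 addr0.
  apply: cvgD; apply: cvgM; try exact: cvg_cst.
    exact: decay_half.
  exact: decay_half.
Qed.

Lemma gfun_bound : inF f -> inF f' ->
  (forall (s : seq site) (c : site), uniq s -> \sum_(z <- s) f (1 + ldist c z)%N <= K) ->
  (forall (s : seq site) (c : site), uniq s -> \sum_(z <- s) f' (1 + ldist c z)%N <= K') ->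
  forall (s : seq site), uniq s -> forall x x' : site,
  \sum_(z <- s) f (1 + ldist x z)%N * f' (1 + ldist x' z)%N <= gfun (1 + ldist x x')%N.
Proof.
move=> fF f'F HK HK' s us x x'.
have [fpos fmon _] := fF; have [f'pos f'mon _] := f'F.
set D := ldist x x'.
have mD : mhalf (1 + D) = (1 + D./2)%N by rewrite /mhalf add1n.
rewrite /gfun mD.
set a := f (1 + D./2)%N; set b := f' (1 + D./2)%N.
have a0 : 0 <= a by apply: ltW; apply: fpos.
have b0 : 0 <= b by apply: ltW; apply: f'pos.
apply: (@le_trans _ _ (\sum_(z <- s) (a * f' (1 + ldist x' z)%N + f (1 + ldist x z)%N * b))).
  apply: ler_sum => z _.
  have hf0 : 0 <= f (1 + ldist x z)%N by apply: ltW; apply: fpos.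
  have hf'0 : 0 <= f' (1 + ldist x' z)%N by apply: ltW; apply: f'pos.
  have tri := ldist_tri x x' z.
  rewrite [ldist z x']ldist_sym -/D in tri.
  have [h|h] : (D./2 <= ldist x z)%N \/ (D./2 <= ldist x' z)%N.
    rewrite -divn2 in tri *; lia.
  - apply: (@le_trans _ _ (a * f' (1 + ldist x' z)%N)).
      by rewrite ler_wpM2r //; apply: fmon; rewrite // leq_add2l.
    by rewrite lerDl mulr_ge0.
  - apply: (@le_trans _ _ (f (1 + ldist x z)%N * b)).
      by rewrite ler_wpM2l //; apply: f'mon; rewrite // leq_add2l.
    by rewrite lerDr mulr_ge0.
rewrite big_split /= -mulr_sumr -mulr_suml.
have h1 := HK s x us; have h2 := HK' s x' us; nra.
Qed.

End G2.

End M_d.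
Import M_d.
Module M_m.
Import numFieldNormedType.Exports.
Local Open Scope classical_set_scope.
Section Esum.
Variable R : realType.

Lemma fin_le_esum (T : choiceType) (I : set T) (a : T -> \bar R) (F : {fset T}) (P : pred T) :
  (forall t, I t -> (0 <= a t)%E) -> (forall t, t \in F -> P t -> I t) ->
  (\sum_(t <- F | P t) a t <= \esum_(t in I) a t)%E.
Proof.
move=> a0 FI; apply: esum_ge; exists [set` [fset t in F | P t]%fset].
  split; first exact: finite_fset.
  by move=> t /=; rewrite !inE /= => /andP[tF Pt]; apply: FI.
rewrite fsbig_finite ?set_fsetK; last exact: finite_fset.
by rewrite -big_fset_condE.
Qed.

Lemma esum_le_bound (T : choiceType) (I : set T) (a : T -> R) (B : R) :
  (forall A : {fset T}, [set` A] `<=` I -> \sum_(t <- A) a t <= B) ->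
  (\esum_(t in I) (a t)%:E <= B%:E)%E.
Proof.
move=> H; apply: ge_ereal_sup => _ [A [finA AI] <-].
rewrite fsbig_finite // sumEFin lee_fin; apply: H.
by move=> t /=; rewrite in_fset_set // inE => /AI.
Qed.

End Esum.

Lemma diam_ge (S : {fset site}) (x z : site) : x \in S -> z \in S -> (ldist x z <= diam S)%N.
Proof.
move=> xS zS; rewrite /diam.
apply: leq_trans (leq_bigmax (FSetSub xS)).
exact: (leq_bigmax (F := fun y : S => ldist x (val y)) (FSetSub zS)).
Qed.

Section Main.
Local Open Scope classical_set_scope.
Variables (R : realType) (d : nat).

Lemma fsum_ge0 (f : nat -> R) (h : interaction R d) x : inF f -> (0 <= fsum f h x)%E.
Proof.
case=> fpos _ _; apply: esum_ge0 => S _; rewrite lee_fin divr_ge0 ?opnorm_ge0 //.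
exact: ltW (fpos (1 + diam S)%N isT).
Qed.

Lemma anchor_bound (X : set site) (h : interaction R d) (U : {fset site}) (S : {fset site}) :
  (forall S : {fset site}, (forall x, x \in S -> ~ X x) -> h S = 0) ->
  (S `<=` U)%fset ->
  opnorm (h S) <= \sum_(x <- U | x \in X) (x \in S)%:R * opnorm (h S).
Proof.
move=> hz SU.
case: (pselect (exists2 x, x \in S & X x)) => [[x xS Xx]|nox].
  have xU : x \in U by apply: (fsubsetP SU).
  rewrite big_mkcond.
  apply: le_trans _ (@term_le_sum _ _ _ (fun j => if j \in X then (j \in S)%:R * opnorm (h S) else 0) _ (fset_uniq U) xU _).
    by rewrite /= mem_set // xS mul1r.
  by move=> j; case: (j \in X); rewrite ?mulr_ge0 ?opnorm_ge0 // ler0n.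
rewrite hz ?opnorm0; last by move=> x xS Xx; apply: nox; exists x.
by apply: sumr_ge0 => x _; rewrite mulr0.
Qed.

Lemma pair_bound (f : nat -> R) (h : interaction R d) (M : R) (P : {fset {fset site}}) (x z : site) :
  inF f -> (forall x, (fsum f h x <= M%:E)%E) ->
  \sum_(S <- P | (x \in S) && (z \in S)) opnorm (h S) <= M * f (1 + ldist x z)%N.
Proof.
move=> fF HM; have [fpos fmon _] := fF.
apply: (@le_trans _ _ (\sum_(S <- P | (x \in S) && (z \in S))
          f (1 + ldist x z)%N * (opnorm (h S) / f (1 + diam S)%N))).
  apply: ler_sum => S /andP[xS zS].
  have fd := fpos (1 + diam S)%N isT.
  rewrite -[opnorm (h S) in X in X <= _](divfK (lt0r_neq0 fd)) mulrC.
  rewrite ler_wpM2r ?divr_ge0 ?opnorm_ge0 ?(ltW fd) //.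
  by apply: fmon; rewrite // leq_add2l diam_ge.
rewrite -mulr_sumr [M * _]mulrC ler_wpM2l ?(ltW (fpos (1 + ldist x z)%N isT)) //.
apply: (@le_trans _ _ (\sum_(S <- P | x \in S) opnorm (h S) / f (1 + diam S)%N)).
  rewrite big_mkcond [X in _ <= X]big_mkcond; apply: ler_sum => S _.
  case: (x \in S); case: (z \in S) => //=.
  by rewrite divr_ge0 ?opnorm_ge0 ?(ltW (fpos (1 + diam S)%N isT)).
rewrite -lee_fin -sumEFin; apply: le_trans (HM x); rewrite /fsum.
apply: (fin_le_esum (I := [set S : {fset site} | x \in S])).
  by move=> S _; rewrite lee_fin divr_ge0 ?opnorm_ge0 ?(ltW (fpos (1 + diam S)%N isT)).
by [].
Qed.

End Main.

End M_m.
Import M_m.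

Theorem lemmaA2 (R : realType) (d : nat) (X X' : set site) (h h' : interaction R d) :
  anchored X h -> anchored X' h' ->
  (forall f : nat -> R, inF f ->
     (\esum_(x in X) \esum_(x' in X') (f (1 + ldist x x')%N)%:E < +oo)%E) ->
  (\esum_(S in [set: {fset site}]) (opnorm (comm_int h h' S))%:E < +oo)%E.
Proof.
move=> [[f [fF [M HM]]] hz] [[f' [f'F [M' HM']]] hz'] Hyp.
have [K [K0 HK]] := sum_decay fF.
have [K' [K'0 HK']] := sum_decay f'F.
pose g := gfun f f' K K'.
have gF : inF g := gfun_inF fF f'F K0 K'0.
have gpos : forall r, (0 < r)%N -> 0 < g r by case: gF.
have Efin := Hyp g gF.
set E := (\esum_(x in X) \esum_(x' in X') (g (1 + ldist x x')%N)%:E)%E in Efin.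
have E0 : (0 <= E)%E.
  apply: esum_ge0 => x _; apply: esum_ge0 => x' _.
  by rewrite lee_fin ltW // gpos.
have Efn : E \is a fin_num by rewrite ge0_fin_numE.
have M0 : 0 <= M by rewrite -lee_fin; apply: le_trans (HM (0, 0)); exact: fsum_ge0.
have M'0 : 0 <= M' by rewrite -lee_fin; apply: le_trans (HM' (0, 0)); exact: fsum_ge0.
apply: (@le_lt_trans _ _ (2 * (M * M' * fine E))%:E); last by rewrite ltry.
apply: esum_le_bound => A _.
pose U := (\bigcup_(S <- A) S)%fset.
have AU : forall S, S \in A -> (S `<=` U)%fset.
  by move=> S SA; apply: (@bigfcup_sup _ _ A S xpredT).
apply: le_trans (ler_sum _ (fun S _ => opnorm_comm_int h h' S)) _.
apply: le_trans (union_step (G := fun S1 S2 => 2 * (opnorm (h S1) * opnorm (h' S2))) AU _) _.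
  by move=> S1 S2; rewrite mulr_ge0 // mulr_ge0 ?opnorm_ge0.
under eq_bigr do rewrite -mulr_sumr.
rewrite -mulr_sumr ler_wpM2l //.
have PU : forall S, S \in fpowerset U -> (S `<=` U)%fset by move=> S; rewrite fpowersetE.
apply: le_trans (chain (XX := fun x => x \in X) (XX' := fun x => x \in X')
   (F := fun x z => M * f (1 + ldist x z)%N) (F' := fun x z => M' * f' (1 + ldist x z)%N)
   (fun S => opnorm_ge0 (h S)) (fun S => opnorm_ge0 (h' S)) PU
   (fun S SP => anchor_bound hz (PU S SP)) (fun S SP => anchor_bound hz' (PU S SP))
   (fun x z => pair_bound _ x z fF HM) (fun x z => pair_bound _ x z f'F HM')) _.
apply: (@le_trans _ _ (M * M' * \sum_(x <- U | x \in X) \sum_(x' <- U | x' \in X') g (1 + ldist x x')%N)).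
  rewrite mulr_sumr; apply: ler_sum => x _.
  rewrite mulr_sumr; apply: ler_sum => x' _.
  apply: (@le_trans _ _ (M * M' * \sum_(z <- U) f (1 + ldist x z)%N * f' (1 + ldist x' z)%N)).
    rewrite mulr_sumr le_eqVlt; apply/orP; left; apply/eqP; apply: eq_bigr => z _; ring.
  rewrite ler_wpM2l ?mulr_ge0 //.
  exact: gfun_bound fF f'F HK HK' _ (fset_uniq U) x x'.
rewrite ler_wpM2l ?mulr_ge0 // -lee_fin (fineK Efn) -sumEFin.
apply: (@le_trans _ _ (\sum_(x <- U | x \in X) \esum_(x' in X') (g (1 + ldist x x')%N)%:E)%E).
  apply: lee_sum => x _; rewrite -sumEFin.
  apply: fin_le_esum; first by move=> x' _; rewrite lee_fin ltW // gpos.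
  by move=> x' _; rewrite inE.
apply: fin_le_esum; last by move=> x _; rewrite inE.
move=> x _; apply: esum_ge0 => x' _; by rewrite lee_fin ltW // gpos.
Qed.
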